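(* Let $b>1$ be an integer, let $H$ be a generalized $b$-happy function with digit mean $\mu$ and digit standard deviation $\sigma$, and let $C\subseteq\mathbb{N}$. Suppose $I$ is an $n$-strict interval with type-$C$ density $d$, where the positive integer $n$ satisfies bound (B): (B1) $4\left(1+3\mu+\sqrt{2}\,\sigma\, b^{5n/8}\right)\le b^{n-1}$, (B2) $\sqrt{3\mu b}\,\sigma\le b^{3n/8}$, (B3) $4\mu\left(3\mu+1+b^{3n/4}+2\sigma\mu^{-1/2}b^{5n/8}\right)\le b^{n-1}$. Then there exist an integer $n_2\ge \frac{b^{n-1}}{\mu}$ and an $n_2$-strict interval $I_2$ whose type-$C$ density is at least $$d\left(1-b^{-n/4}\right)\left(1-\frac{2\sigma}{\sqrt{\mu}}b^{-n/8}\right).$$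
   Context: A generalized $b$-happy function: fix an integer $b>1$ and non-negative integers $h(0),\dots,h(b-1)$ with $h(0)=0$, $h(1)=1$; for $n=\sum_{i=0}^k a_ib^i$ in base $b$, $H(n)=\sum_{i=0}^k h(a_i)$. Digit mean $\mu=\frac1b\sum_{j=0}^{b-1}h(j)$, digit variance $\sigma^2=\frac1b\sum_{j=0}^{b-1}(h(j)-\mu)^2$. An integer $n$ is type-$C$ if $H^k(n)\in C$ for some integer $k\ge0$. An integer interval $[a,c]$ is the set of integers $x$ with $a\le x\le c$; $|I|$ is its cardinality. The type-$C$ density of a finite nonempty integer interval $I$ is $|\{n\in I:n\text{ type-}C\}|/|I|$. For a positive integer $m$, an integer interval $I$ is $m$-strict if $I\subseteq[b^{m-1},b^m-1]$ and $|I|=b^{3m/4}$. *)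

(* Defs.v *)
From Stdlib Require Import Reals Lra Lia Arith List ClassicalDescription.
Import ListNotations.
Open Scope R_scope.

(* H(n) = sum of h over the base-b digits of n (fuel = n suffices when b > 1). *)
Fixpoint Haux (b : nat) (h : nat -> nat) (fuel m : nat) : nat :=
  match fuel with
  | O => O
  | S f => if Nat.eqb m 0 then O else (h (Nat.modulo m b) + Haux b h f (Nat.div m b))%nat
  end.

Definition Hfun (b : nat) (h : nat -> nat) (m : nat) : nat := Haux b h m m.

Definition digit_mean (b : nat) (h : nat -> nat) : R :=
  (/ INR b) * sum_f_R0 (fun j => INR (h j)) (b - 1).

Definition digit_var (b : nat) (h : nat -> nat) : R :=
  (/ INR b) * sum_f_R0 (fun j => (INR (h j) - digit_mean b h) ^ 2) (b - 1).

Definition digit_sd (b : nat) (h : nat -> nat) : R := sqrt (digit_var b h).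

Definition typeC (b : nat) (h : nat -> nat) (C : nat -> Prop) (m : nat) : Prop :=
  exists k : nat, C (Nat.iter k (Hfun b h) m).

Definition icard (a c : nat) : nat := (c + 1 - a)%nat.

Definition count_typeC (b : nat) (h : nat -> nat) (C : nat -> Prop) (a c : nat) : nat :=
  length (filter (fun x => if excluded_middle_informative (typeC b h C x) then true else false)
                 (seq a (icard a c))).

Definition density (b : nat) (h : nat -> nat) (C : nat -> Prop) (a c : nat) : R :=
  INR (count_typeC b h C a c) / INR (icard a c).

Definition strict (b m a c : nat) : Prop :=
  (0 < m)%nat /\ (b ^ (m - 1) <= a)%nat /\ (c <= b ^ m - 1)%nat /\
  INR (icard a c) = Rpower (INR b) (3 * INR m / 4).

(* Main.v *)
Require Import Defs.
From Stdlib Require Import Reals Lra Lia Arith ZArith List Classical ClassicalDescription.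
Import ListNotations.
Open Scope R_scope.

Section H.
Variable b : nat.
Variable h : nat -> nat.
Hypothesis Hb : (1 < b)%nat.
Hypothesis h0 : h 0%nat = 0%nat.

Lemma Haux_stable : forall f1 f2 m, (m <= f1)%nat -> (m <= f2)%nat ->
  Haux b h f1 m = Haux b h f2 m.
Proof.
  induction f1 as [|f1 IH]; intros f2 m H1 H2.
  - assert (m = 0%nat) by lia. subst. destruct f2; reflexivity.
  - destruct (Nat.eq_dec m 0) as [->|Hm].
    + destruct f2; reflexivity.
    + destruct f2 as [|f2]; [lia|]. simpl.
      assert (E: Nat.eqb m 0 = false) by (apply Nat.eqb_neq; auto). rewrite E.
      f_equal. apply IH.
      * assert (m / b < m)%nat by (apply Nat.div_lt; lia). lia.
      * assert (m / b < m)%nat by (apply Nat.div_lt; lia). lia.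
Qed.

Lemma Hfun_0 : Hfun b h 0 = 0%nat.
Proof. reflexivity. Qed.

Lemma Hfun_step : forall x d, (d < b)%nat -> Hfun b h (x * b + d) = (h d + Hfun b h x)%nat.
Proof.
  intros x d Hd. unfold Hfun.
  destruct (Nat.eq_dec (x*b+d) 0) as [E|E].
  - assert (x = 0%nat /\ d = 0%nat) as [-> ->] by nia. simpl. rewrite h0. reflexivity.
  - remember (x*b+d)%nat as m eqn:Em. destruct m as [|m']; [lia|]. simpl.
    rewrite Em.
    replace ((x * b + d) mod b)%nat with d.
    2:{ replace (x*b+d)%nat with (d + x*b)%nat by lia. rewrite Nat.Div0.mod_add. rewrite Nat.mod_small; auto. }
    replace ((x * b + d) / b)%nat with x.
    2:{ rewrite Nat.div_add_l by lia. rewrite Nat.div_small by auto. lia. }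
    f_equal. apply Haux_stable; nia.
Qed.

Lemma Hfun_shift : forall k P y, (y < b ^ k)%nat ->
  Hfun b h (P * b ^ k + y) = (Hfun b h P + Hfun b h y)%nat.
Proof.
  induction k as [|k IH]; intros P y Hy.
  - simpl in Hy. assert (y = 0%nat) by lia. subst. rewrite Nat.pow_0_r, Nat.mul_1_r, Nat.add_0_r.
    rewrite Hfun_0. lia.
  - assert (Hbk : (0 < b ^ k)%nat) by (apply Nat.neq_0_lt_0, Nat.pow_nonzero; lia).
    pose proof (Nat.div_mod_eq y b) as Ey.
    assert (Hq : (y / b < b ^ k)%nat).
    { apply Nat.Div0.div_lt_upper_bound. rewrite Nat.pow_succ_r' in Hy. lia. }
    assert (Hr : (y mod b < b)%nat) by (apply Nat.mod_upper_bound; lia).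
    replace (P * b ^ S k + y)%nat with ((P * b ^ k + y / b) * b + y mod b)%nat
      by (rewrite Nat.pow_succ_r'; nia).
    rewrite Hfun_step by auto. rewrite IH by auto.
    replace y with (y / b * b + y mod b)%nat at 3 by lia.
    rewrite Hfun_step by auto. lia.
Qed.

Fixpoint rep (s : nat) : nat := match s with O => O | S s => (rep s * b + 1)%nat end.

Lemma Hfun_rep (h1 : h 1%nat = 1%nat) : forall s, Hfun b h (rep s) = s.
Proof.
  induction s; simpl; auto. rewrite Hfun_step by lia. rewrite h1, IHs. lia.
Qed.

Lemma rep_bounds : forall s, (1 <= s)%nat -> (b ^ (s - 1) <= rep s < b ^ s)%nat.
Proof.
  induction s; intros Hs; [lia|].
  destruct s as [|s].
  - simpl. lia.
  - specialize (IHs ltac:(lia)). replace (S (S s) - 1)%nat with (S s) by lia.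
    replace (S s - 1)%nat with s in IHs by lia.
    change (rep (S (S s))) with (rep (S s) * b + 1)%nat.
    rewrite !Nat.pow_succ_r' in *. nia.
Qed.
End H.
Fixpoint rsum (f : nat -> R) (n : nat) : R :=
  match n with O => 0 | S n => rsum f n + f n end.

Lemma rsum_ext : forall f g n, (forall i, (i < n)%nat -> f i = g i) -> rsum f n = rsum g n.
Proof. intros f g n H; induction n; simpl; auto. rewrite IHn by (intros; apply H; lia). rewrite H by lia. auto. Qed.

Lemma rsum_le : forall f g n, (forall i, (i < n)%nat -> f i <= g i) -> rsum f n <= rsum g n.
Proof. intros f g n H; induction n; simpl; [lra|]. assert (f n <= g n) by (apply H; lia).
  assert (rsum f n <= rsum g n) by (apply IHn; intros; apply H; lia). lra. Qed.

Lemma rsum_plus : forall f g n, rsum (fun i => f i + g i) n = rsum f n + rsum g n.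
Proof. intros; induction n; simpl; lra. Qed.

Lemma rsum_scal : forall c f n, rsum (fun i => c * f i) n = c * rsum f n.
Proof. intros; induction n; simpl; [ring|]. rewrite IHn; ring. Qed.

Lemma rsum_const : forall c n, rsum (fun _ => c) n = INR n * c.
Proof. intros; induction n; simpl; [ring|]. rewrite IHn; destruct n; simpl; ring. Qed.

Lemma rsum_add_range : forall f p q, rsum f (p + q) = rsum f p + rsum (fun i => f (p + i)%nat) q.
Proof. intros f p q; induction q; simpl. rewrite Nat.add_0_r; ring.
  rewrite Nat.add_succ_r. simpl. rewrite IHq. ring. Qed.

Lemma rsum_mul_split : forall f m c, rsum f (m * c) = rsum (fun q => rsum (fun d => f (q * c + d)%nat) c) m.
Proof. intros f m c; induction m; simpl; auto.
  replace (c + m * c)%nat with (m * c + c)%nat by lia. rewrite rsum_add_range, IHm. auto. Qed.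

Lemma rsum_nonneg : forall f n, (forall i, (i < n)%nat -> 0 <= f i) -> 0 <= rsum f n.
Proof. intros f n H; induction n; simpl; [lra|]. assert (0 <= f n) by (apply H; lia).
  assert (0 <= rsum f n) by (apply IHn; intros; apply H; lia). lra. Qed.

Lemma rsum_ge_term : forall f n i, (forall i, (i < n)%nat -> 0 <= f i) -> (i < n)%nat -> f i <= rsum f n.
Proof. intros f n i H Hi; induction n; simpl; [lia|].
  destruct (Nat.eq_dec i n) as [->|Hne].
  - assert (0 <= rsum f n) by (apply rsum_nonneg; intros; apply H; lia). lra.
  - assert (f i <= rsum f n) by (apply IHn; [intros; apply H; lia| lia]). assert (0 <= f n) by (apply H; lia). lra. Qed.

Lemma sum_f_R0_rsum : forall f m, sum_f_R0 f m = rsum f (S m).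
Proof. intros f m; induction m; simpl; [ring|]. simpl in IHm. rewrite IHm. ring. Qed.

Lemma rsum_swap : forall f p q, rsum (fun i => rsum (fun j => f i j) q) p = rsum (fun j => rsum (fun i => f i j) p) q.
Proof. intros f p q; induction p; simpl.
  - rewrite rsum_const. ring.
  - rewrite IHp, <- rsum_plus. auto. Qed.

Lemma pigeon : forall g M, (0 < M)%nat -> exists i, (i < M)%nat /\ rsum g M <= INR M * g i.
Proof. intros g M HM. destruct (Classical_Prop.classic (exists i, (i < M)%nat /\ rsum g M <= INR M * g i)) as [H|H]; auto.
  exfalso. assert (Hall : forall i, (i < M)%nat -> INR M * g i < rsum g M).
  { intros i Hi. apply Rnot_le_lt. intro. apply H. eauto. }
  assert (rsum (fun i => INR M * g i) M < rsum (fun _ => rsum g M) M).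
  { destruct M; [lia|]. simpl. assert (rsum (fun i => INR (S M) * g i) M <= rsum (fun _ => rsum g (S M)) M).
    { apply rsum_le. intros. left. apply Hall. lia. } assert (INR (S M) * g M < rsum g (S M)) by (apply Hall; lia).
    simpl in *. lra. }
  rewrite rsum_scal, rsum_const in H0. lra. Qed.

Lemma count_rsum : forall (g : nat -> bool) s m,
  INR (length (filter g (seq s m))) = rsum (fun i => if g (s + i)%nat then 1 else 0) m.
Proof. intros g s m; induction m; [reflexivity|].
  cbn [rsum]. rewrite seq_S, filter_app, length_app, plus_INR, IHm. simpl. destruct (g (s+m)%nat); simpl; ring. Qed.

Section Var.
Variable b : nat.
Variable h : nat -> nat.
Hypothesis Hb : (1 < b)%nat.
Hypothesis h0 : h 0%nat = 0%nat.

Lemma bpos : 0 < INR b.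
Proof. apply lt_0_INR. lia. Qed.

Lemma sum_h : rsum (fun d => INR (h d)) b = INR b * digit_mean b h.
Proof. unfold digit_mean. rewrite sum_f_R0_rsum. replace (S (b - 1)) with b by lia.
  field. apply Rgt_not_eq, bpos. Qed.

Lemma sum_hc : rsum (fun d => INR (h d) - digit_mean b h) b = 0.
Proof. unfold Rminus. rewrite rsum_plus, sum_h, rsum_const. ring. Qed.

Lemma sum_hv : rsum (fun d => (INR (h d) - digit_mean b h) ^ 2) b = INR b * digit_var b h.
Proof. unfold digit_var. rewrite sum_f_R0_rsum. replace (S (b - 1)) with b by lia.
  field. apply Rgt_not_eq, bpos. Qed.

Lemma var_k : forall k, rsum (fun y => (INR (Hfun b h y) - INR k * digit_mean b h) ^ 2) (b ^ k)
   = INR (b ^ k) * INR k * digit_var b h.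
Proof.
  induction k.
  - simpl. unfold Hfun. simpl. ring.
  - replace (b ^ S k)%nat with (b ^ k * b)%nat by (simpl; lia).
    rewrite rsum_mul_split.
    set (mu := digit_mean b h). set (v := digit_var b h).
    transitivity (rsum (fun q => INR b * (INR (Hfun b h q) - INR k * mu) ^ 2 + INR b * v) (b ^ k)).
    + apply rsum_ext. intros q Hq.
      transitivity (rsum (fun d => (INR (Hfun b h q) - INR k * mu) ^ 2
          + (2 * (INR (Hfun b h q) - INR k * mu)) * (INR (h d) - mu) + (INR (h d) - mu) ^ 2) b).
      * apply rsum_ext. intros d Hd. rewrite Hfun_step by auto. rewrite plus_INR, S_INR. ring.
      * rewrite !rsum_plus, rsum_scal, rsum_const. unfold mu. rewrite sum_hc. fold mu.
        unfold v, mu. rewrite sum_hv. ring.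
    + rewrite rsum_plus, rsum_scal, rsum_const. unfold mu, v. rewrite IHk. rewrite mult_INR, S_INR. ring.
Qed.

Lemma bmu_ge1 (h1 : h 1%nat = 1%nat) : 1 <= INR b * digit_mean b h.
Proof. rewrite <- sum_h. replace 1 with (INR (h 1)) by (rewrite h1; reflexivity).
  apply (rsum_ge_term (fun d => INR (h d))). intros; apply pos_INR. lia. Qed.

Lemma var_nonneg : 0 <= digit_var b h.
Proof. unfold digit_var. apply Rmult_le_pos. left; apply Rinv_0_lt_compat, bpos.
  apply cond_pos_sum. intros; apply pow2_ge_0. Qed.
End Var.
Lemma sqrt_le_of_sq : forall x q, 0 <= q -> x <= q ^ 2 -> sqrt x <= q.
Proof. intros x q Hq Hx. destruct (Rle_dec 0 x).
  - rewrite <- (sqrt_pow2 q Hq). apply sqrt_le_1_alt. lra.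
  - rewrite sqrt_neg_0 by lra. lra. Qed.

Lemma R1 (b mu sg B P a x : R) :
  2 <= b -> 0 < mu -> 1 <= b*mu -> 0 <= sg -> 0 < B -> B^8 = b*P -> P <= a ->
  4*(1 + 3*mu + sqrt 2 * sg * B^5) <= P ->
  P/(4*mu) <= x < P/(4*mu) + 1 ->
  3*x*mu + sg*B*sqrt(3*x) < a.
Proof.
  intros Hb Hmu Hbmu Hsg HB HB8 HPa HB1 [Hx1 Hx2].
  assert (Hs2 : 1.41 <= sqrt 2).
  { rewrite <- (sqrt_pow2 1.41) by lra. apply sqrt_le_1_alt. lra. }
  assert (HP : 4 + 12 * mu <= P).
  { assert (0 <= sqrt 2 * sg * B^5) by (apply Rmult_le_pos; [apply Rmult_le_pos; [apply sqrt_pos|lra]| apply pow_le; lra]). lra. }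
  assert (HB8' : 20 <= B^8) by nra.
  assert (HB4 : 4 <= B^4) by nra.
  assert (HxP : x * mu < P/4 + mu).
  { assert (E : P/(4*mu) * mu = P/4) by (field; lra). nra. }
  assert (HPm : P / mu <= B^8).
  { rewrite HB8. apply Rmult_le_reg_r with mu; auto.
    replace (P / mu * mu) with P by (field; lra). assert (0 <= P) by lra. nra. }
  assert (Hx3 : 3 * x <= 0.75 * B^8 + 3).
  { assert (P/(4*mu) = /4 * (P/mu)) by (field; lra). lra. }
  assert (HX : sqrt (3*x) <= 0.87 * B^4 + 2).
  { apply sqrt_le_of_sq. nra. nra. }
  assert (HB5 : 0 <= sg * B^5) by (apply Rmult_le_pos; [lra| apply pow_le; lra]).
  assert (H5 : 1.41 * (sg * B^5) <= sqrt 2 * sg * B^5).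
  { replace (sqrt 2 * sg * B^5) with (sqrt 2 * (sg * B^5)) by ring. apply Rmult_le_compat_r; lra. }
  assert (HsgB : sg * B * sqrt (3*x) <= sg * B * (0.87 * B^4 + 2)).
  { apply Rmult_le_compat_l; [nra|auto]. }
  assert (Hk : 2 * (sg * B) <= 0.54 * (sg * B^5)).
  { replace (sg * B^5) with ((sg*B) * B^4) by ring. nra. }
  nra.
Qed.

Lemma R2 (b mu sg B P a y : R) :
  2 <= b -> 0 < mu -> 1 <= b*mu -> 0 <= sg -> 0 < B -> B^8 = b*P ->
  4*(1 + 3*mu + sqrt 2 * sg * B^5) <= P ->
  4*mu*(3*mu + 1 + B^6 + 2*sg*(/ sqrt mu)*B^5) <= P ->
  P/(4*mu) <= y ->
  a <= 3*(y+1)*mu + sg*B*sqrt(3*(y+1)) ->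
  a + B^6 - 1 - 3*y*mu + sg*B*sqrt(3*y) < y + 1.
Proof.
  intros Hb Hmu Hbmu Hsg HB HB8 HB1 HB3 Hy Ha.
  assert (HP : 4 + 12 * mu <= P).
  { assert (0 <= sqrt 2 * sg * B^5) by (apply Rmult_le_pos; [apply Rmult_le_pos; [apply sqrt_pos|lra]| apply pow_le; lra]). lra. }
  assert (HB8' : 20 <= B^8) by nra.
  assert (HB4 : 4 <= B^4) by nra.
  assert (HB2 : 2 <= B^2) by nra.
  set (J := P/(4*mu)) in *.
  set (sm := sqrt mu) in *.
  assert (Hsm : 0 < sm) by (apply sqrt_lt_R0; auto).
  assert (Hsm2 : sm * sm = mu) by (apply sqrt_sqrt; lra).
  set (K := sg * B^5 / sm).
  assert (HK0 : 0 <= K) by (unfold K; apply Rmult_le_pos; [apply Rmult_le_pos; [lra|apply pow_le; lra]| left; apply Rinv_0_lt_compat; auto]).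
  assert (HJ : 3*mu + 1 + B^6 + 2*K <= J).
  { unfold J, K. apply Rmult_le_reg_l with (4*mu); [lra|].
    replace (4 * mu * (P / (4 * mu))) with P by (field; lra).
    replace (2 * (sg * B ^ 5 / sm)) with (2 * sg * / sm * B^5) by (field; lra). lra. }
  assert (Hmu2 : 12 * (mu*mu) <= P).
  { assert (E : 4*mu*J = P) by (unfold J; field; lra).
    assert (0 <= 4 * mu * (1 + B^6 + 2*K)) by (apply Rmult_le_pos; [lra| assert (0 <= B^6) by (apply pow_le; lra); lra]).
    nra. }
  assert (HPb : P <= B^8 / 2).
  { apply Rmult_le_reg_l with 2; [lra|]. replace (2 * (B^8/2)) with (B^8) by field. nra. }
  assert (Hmub : mu <= B^4 / 4.89).
  { assert (mu * mu <= (B^4/4.89)^2) by nra. nra. }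
  assert (Hsmb : sm <= B^2 / 2.21).
  { assert (sm * sm <= (B^2/2.21)^2) by nra. nra. }
  assert (HKs : 4.42 * (sg * B) <= K).
  { unfold K. apply Rmult_le_reg_r with sm; auto. replace (sg * B ^ 5 / sm * sm) with (sg * B^5) by (field; lra).
    assert (0 <= sg * B) by nra. replace (sg * B^5) with ((sg*B) * B^4) by ring.
    assert (4.42 * sm <= B^4) by nra. nra. }
  set (Z := sqrt (3 * J)).
  assert (HJ0 : 0 <= J) by (assert (0 <= B^6) by (apply pow_le; lra); lra).
  assert (HZ2 : Z * Z = 3 * J) by (apply sqrt_sqrt; lra).
  assert (HZ0 : 0 <= Z) by apply sqrt_pos.
  assert (HZsm : Z * sm <= 0.62 * B^4).
  { assert ((Z*sm)*(Z*sm) = 3 * P / 4) by (replace ((Z*sm)*(Z*sm)) with ((Z*Z)*(sm*sm)) by ring; rewrite HZ2, Hsm2; unfold J; field; lra).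
    assert (0 <= Z * sm) by nra. nra. }
  assert (HsgZ : sg * B * Z <= 0.62 * K).
  { unfold K. apply Rmult_le_reg_r with sm; auto. replace (0.62 * (sg * B ^ 5 / sm) * sm) with (0.62 * sg * B^5) by (field; lra).
    assert (0 <= sg * B) by nra. replace (sg * B * Z * sm) with ((sg * B) * (Z * sm)) by ring.
    replace (0.62 * sg * B^5) with ((sg*B) * (0.62 * B^4)) by ring. apply Rmult_le_compat_l; auto. }
  assert (HB6 : 8 <= B^6) by nra.
  assert (Hbp : J + 2 - 3*mu - B^6 - 2*(sg*B) - 2*(sg*B*Z) > 0) by nra.
  assert (HZs : 3 * (sg*B) <= Z) by nra.
  set (Y := sqrt (3 * y)).
  assert (HY2 : Y * Y = 3 * y) by (apply sqrt_sqrt; lra).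
  assert (HY0 : 0 <= Y) by apply sqrt_pos.
  assert (HYZ : Z <= Y) by (apply sqrt_le_1_alt; lra).
  assert (HY' : sqrt (3 * (y+1)) <= Y + 2) by (apply sqrt_le_of_sq; nra).
  assert (Hmono : J - 2*(sg*B*Z) <= y - 2*(sg*B*Y)) by nra.
  assert (HsgB : 0 <= sg * B) by nra.
  assert (sg*B*sqrt (3*(y+1)) <= sg*B*(Y+2)) by (apply Rmult_le_compat_l; auto).
  nra.
Qed.
Lemma floor_ex : forall x, 0 <= x -> exists e : nat, INR e <= x < INR e + 1.
Proof.
  intros x Hx. destruct (archimed x) as [H1 H2].
  assert (Hu : (0 < up x)%Z) by (apply lt_IZR; lra).
  exists (Z.to_nat (up x - 1)).
  rewrite INR_IZR_INZ, Z2Nat.id by lia. rewrite minus_IZR. simpl. lra.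
Qed.

Lemma ceil_ex : forall x, 0 <= x -> exists m : nat, x <= INR m < x + 1.
Proof.
  intros x Hx. destruct (floor_ex x Hx) as [e He].
  destruct (Req_dec (INR e) x) as [E|E].
  - exists e; lra.
  - exists (S e). rewrite S_INR. lra.
Qed.

Lemma max_ex : forall (P : nat -> Prop) k j0, P j0 -> ~ P (j0 + k)%nat ->
  exists j, (j0 <= j)%nat /\ P j /\ ~ P (S j).
Proof.
  intros P k; induction k; intros j0 H1 H2.
  - rewrite Nat.add_0_r in H2. contradiction.
  - destruct (classic (P (S j0))) as [H|H].
    + destruct (IHk (S j0) H) as [j [Hj1 Hj2]]. { replace (S j0 + k)%nat with (j0 + S k)%nat by lia; auto. }
      exists j; split; [lia|auto].
    + exists j0; repeat split; auto.
Qed.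

Lemma feas (b mu sg B P a : R) :
  2 <= b -> 0 < mu -> 1 <= b*mu -> 0 <= sg -> 0 < B -> B^8 = b*P -> P <= a ->
  4*(1 + 3*mu + sqrt 2 * sg * B^5) <= P ->
  4*mu*(3*mu + 1 + B^6 + 2*sg*(/ sqrt mu)*B^5) <= P ->
  exists j : nat, P/mu <= 4 * INR j /\ 3*INR j*mu + sg*B*sqrt(3*INR j) < a /\
    a + B^6 - 1 - 3*INR j*mu + sg*B*sqrt(3*INR j) < INR j + 1.
Proof.
  intros Hb Hmu Hbmu Hsg HB HB8 HPa HB1 HB3.
  assert (HP0 : 0 <= P).
  { assert (0 <= sqrt 2 * sg * B^5) by (apply Rmult_le_pos; [apply Rmult_le_pos; [apply sqrt_pos|lra]| apply pow_le; lra]). lra. }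
  assert (HJ0 : 0 <= P/(4*mu)) by (apply Rmult_le_pos; [lra| left; apply Rinv_0_lt_compat; lra]).
  destruct (ceil_ex _ HJ0) as [j0 Hj0].
  assert (Hg0 : 3*INR j0*mu + sg*B*sqrt(3*INR j0) < a) by (eapply R1; eauto).
  assert (Ha0 : 0 <= a / (3*mu)) by (apply Rmult_le_pos; [lra| left; apply Rinv_0_lt_compat; lra]).
  destruct (ceil_ex _ Ha0) as [N HN].
  pose (Pj := fun j : nat => 3*INR j*mu + sg*B*sqrt(3*INR j) < a).
  assert (HNf : ~ Pj (j0 + N)%nat).
  { unfold Pj. rewrite plus_INR. intro Hc.
    assert (a <= 3 * INR N * mu).
    { assert (E : a / (3*mu) * (3*mu) = a) by (field; lra).
      assert (a / (3*mu) * (3*mu) <= INR N * (3*mu)) by (apply Rmult_le_compat_r; lra). lra. }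
    assert (0 <= sg * B * sqrt (3 * (INR j0 + INR N))) by (apply Rmult_le_pos; [nra| apply sqrt_pos]).
    assert (0 <= INR j0) by apply pos_INR. nra. }
  destruct (max_ex Pj N j0 Hg0 HNf) as [j [Hjj0 [Hj HjS]]].
  assert (HjJ : P/(4*mu) <= INR j) by (apply le_INR in Hjj0; lra).
  exists j. split; [|split; auto].
  - assert (P/mu = 4 * (P/(4*mu))) by (field; lra). lra.
  - unfold Pj in HjS. rewrite S_INR in HjS. apply Rnot_lt_le in HjS.
    eapply R2; eauto.
Qed.

Lemma rsum_range : forall f p q L M, (forall i, 0 <= f i) -> (p <= q)%nat -> (q + L <= p + M)%nat ->
  rsum (fun i => f (q + i)%nat) L <= rsum (fun i => f (p + i)%nat) M.
Proof.
  intros f p q L M Hf H1 H2.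
  replace M with ((q - p) + (L + (M - (q - p) - L)))%nat by lia.
  rewrite rsum_add_range, rsum_add_range.
  assert (E : rsum (fun i => f (p + (q - p + i))%nat) L = rsum (fun i => f (q + i)%nat) L).
  { apply rsum_ext. intros. f_equal. lia. }
  assert (0 <= rsum (fun i => f (p + i)%nat) (q - p)) by (apply rsum_nonneg; auto).
  assert (0 <= rsum (fun i => f (p + (q - p + (L + i)))%nat) (M - (q - p) - L)) by (apply rsum_nonneg; auto).
  rewrite <- E. lra.
Qed.

Lemma Rpow_B : forall x y k, 0 < x -> Rpower x y ^ k = Rpower x (y * INR k).
Proof. intros x y k Hx. rewrite <- Rpower_pow by (unfold Rpower; apply exp_pos). apply Rpower_mult. Qed.

Definition fT (b : nat) (h : nat -> nat) (C : nat -> Prop) (x : nat) : bool :=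
  if excluded_middle_informative (typeC b h C x) then true else false.
Definition Tr b h C x : R := if fT b h C x then 1 else 0.

Lemma Tr_nonneg : forall b h C x, 0 <= Tr b h C x.
Proof. intros. unfold Tr. destruct (fT b h C x); lra. Qed.

Lemma Tr_H : forall b h C x, Tr b h C (Hfun b h x) <= Tr b h C x.
Proof. intros. unfold Tr, fT.
  destruct (excluded_middle_informative (typeC b h C (Hfun b h x))) as [[k Hk]|];
  destruct (excluded_middle_informative (typeC b h C x)) as [|Hn]; try lra.
  exfalso. apply Hn. exists (S k). rewrite Nat.iter_succ_r. auto. Qed.

Lemma count_Tr : forall b h C a c, INR (count_typeC b h C a c) = rsum (fun i => Tr b h C (a + i)) (icard a c).
Proof. intros. unfold count_typeC. rewrite count_rsum. reflexivity. Qed.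

Theorem theorem3p4 (b : nat) (h : nat -> nat) (C : nat -> Prop) (n a c : nat) (d : R) :
  (1 < b)%nat -> h 0%nat = 0%nat -> h 1%nat = 1%nat ->
  (0 < n)%nat ->
  strict b n a c ->
  d = density b h C a c ->
  (* (B1) *)
  4 * (1 + 3 * digit_mean b h + sqrt 2 * digit_sd b h * Rpower (INR b) (5 * INR n / 8))
    <= INR (b ^ (n - 1)) ->
  (* (B2) *)
  sqrt (3 * digit_mean b h * INR b) * digit_sd b h <= Rpower (INR b) (3 * INR n / 8) ->
  (* (B3) *)
  4 * digit_mean b h *
    (3 * digit_mean b h + 1 + Rpower (INR b) (3 * INR n / 4)
     + 2 * digit_sd b h * Rpower (digit_mean b h) (- (1 / 2)) * Rpower (INR b) (5 * INR n / 8))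
    <= INR (b ^ (n - 1)) ->
  exists n2 a2 c2 : nat,
    INR (b ^ (n - 1)) / digit_mean b h <= INR n2 /\
    strict b n2 a2 c2 /\
    d * (1 - Rpower (INR b) (- (INR n / 4)))
      * (1 - 2 * digit_sd b h / sqrt (digit_mean b h) * Rpower (INR b) (- (INR n / 8)))
    <= density b h C a2 c2.
Proof.
  intros Hb h0 h1 Hn Hstr Hd HB1 _ HB3.
  destruct Hstr as [_ [Ha1 [Hc1 HL]]].
  set (Ln := icard a c) in *.
  assert (Hb0 : 0 < INR b) by (apply lt_0_INR; lia).
  assert (Hb2 : 2 <= INR b) by (replace 2 with (INR 2) by (simpl; ring); apply le_INR; lia).
  set (B := Rpower (INR b) (INR n / 8)).
  assert (HB : 0 < B) by (unfold B, Rpower; apply exp_pos).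
  assert (HBk : forall k, B ^ k = Rpower (INR b) (INR n / 8 * INR k)) by (intros; unfold B; apply Rpow_B; auto).
  assert (E6 : Rpower (INR b) (3 * INR n / 4) = B ^ 6) by (rewrite HBk; f_equal; simpl; field).
  assert (E5 : Rpower (INR b) (5 * INR n / 8) = B ^ 5) by (rewrite HBk; f_equal; simpl; field).
  assert (E8 : B ^ 8 = INR b ^ n) by (rewrite HBk, <- Rpower_pow by auto; f_equal; simpl; field).
  assert (Em4 : Rpower (INR b) (- (INR n / 4)) = / B ^ 2) by (rewrite Rpower_Ropp, HBk; f_equal; f_equal; simpl; field).
  assert (Em8 : Rpower (INR b) (- (INR n / 8)) = / B) by (rewrite Rpower_Ropp; reflexivity).
  set (mu := digit_mean b h) in *.
  set (sg := digit_sd b h) in *.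
  assert (Hbmu : 1 <= INR b * mu) by (apply bmu_ge1; auto).
  assert (Hmu : 0 < mu) by nra.
  assert (Emh : Rpower mu (- (1/2)) = / sqrt mu) by (rewrite Rpower_Ropp; f_equal; replace (1/2) with (/2) by field; apply Rpower_sqrt; auto).
  assert (Hvar : 0 <= digit_var b h) by (apply var_nonneg; auto).
  assert (Hsg2 : sg * sg = digit_var b h) by (apply sqrt_sqrt; auto).
  assert (Hsg : 0 <= sg) by apply sqrt_pos.
  set (P := INR (b ^ (n - 1))) in *.
  assert (HBP : B ^ 8 = INR b * P).
  { rewrite E8. unfold P. rewrite pow_INR. replace n with (S (n - 1)) at 1 by lia. simpl. ring. }
  rewrite E6 in HL, HB3. rewrite E5 in HB1, HB3. rewrite Emh in HB3.
  assert (HPa : P <= INR a) by (unfold P; apply le_INR; auto).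
  assert (HLn1 : (1 <= Ln)%nat).
  { destruct Ln; [|lia]. simpl in HL. assert (0 < B^6) by (apply pow_lt; auto). lra. }
  assert (HaB : INR a + INR Ln <= B ^ 8).
  { rewrite E8, <- pow_INR, <- plus_INR. apply le_INR. unfold Ln, icard in *.
    assert (0 < b ^ n)%nat by (apply Nat.neq_0_lt_0, Nat.pow_nonzero; lia). lia. }
  destruct (feas (INR b) mu sg B P (INR a)) as [j [Hj1 [Hj2 Hj3]]]; auto.
  set (k := (3 * j)%nat).
  assert (Ek : INR k = 3 * INR j) by (unfold k; rewrite mult_INR; simpl; ring).
  set (t := INR k * mu).
  set (w := sg * B * sqrt (INR k)).
  assert (Hw : 0 <= w) by (unfold w; apply Rmult_le_pos; [nra|apply sqrt_pos]).
  rewrite <- Ek in Hj2, Hj3.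
  assert (Hj2' : t + w < INR a) by (unfold t, w; lra).
  assert (Hj3' : INR a + INR Ln - 1 - t + w < INR j + 1) by (unfold t, w; rewrite HL; lra).
  assert (HP0 : 0 < P).
  { assert (0 <= sqrt 2 * sg * B^5) by (apply Rmult_le_pos; [apply Rmult_le_pos; [apply sqrt_pos|lra]| apply pow_le; lra]). lra. }
  assert (Hj0 : (1 <= j)%nat).
  { destruct j; [|lia]. simpl in Hj1. assert (0 < P / mu) by (apply Rdiv_lt_0_compat; auto). lra. }
  destruct (ceil_ex (INR a - t - w)) as [s0 Hs0]; [lra|].
  destruct (floor_ex (INR a + INR Ln - 1 - t + w)) as [e He].
  { assert (1 <= INR Ln) by (apply (le_INR 1); auto). lra. }
  assert (Hs01 : (1 <= s0)%nat).
  { destruct s0; [|lia]. simpl in Hs0. lra. }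
  assert (Hej : (e <= j)%nat).
  { assert (INR e < INR (S j)) by (rewrite S_INR; lra). apply INR_lt in H. lia. }
  assert (HLn2 : 2 <= INR Ln).
  { rewrite HL. assert (HB8 : 20 <= B^8).
    { assert (0 <= sqrt 2 * sg * B^5) by (apply Rmult_le_pos; [apply Rmult_le_pos; [apply sqrt_pos|lra]| apply pow_le; lra]). nra. }
    assert (H1B : 1 < B).
    { apply Rnot_le_lt; intro. assert (B^8 <= 1^8) by (apply pow_incr; lra). simpl in *. lra. }
    assert (B^2 <= B^6) by (replace (B^6) with (B^2 * B^4) by ring; assert (1 <= B^4) by (apply pow_R1_Rle; lra); assert (0 < B^2) by (apply pow_lt; lra); nra).
    assert (B^8 = B^6 * B^2) by ring. nra. }
  assert (Hse : (s0 <= e)%nat).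
  { assert (INR s0 < INR (S e)) by (rewrite S_INR; lra). apply INR_lt in H. lia. }
  set (M := (e + 1 - s0)%nat).
  assert (HM : INR M <= INR Ln + 2 * w).
  { unfold M. rewrite minus_INR by lia. rewrite plus_INR. simpl. lra. }
  set (D := rsum (fun i => Tr b h C (a + i)) Ln).
  assert (Hdd : d = D / INR Ln) by (rewrite Hd; unfold density; rewrite count_Tr; reflexivity).
  assert (HD0 : 0 <= D) by (apply rsum_nonneg; intros; apply Tr_nonneg).
  set (Ind := fun y => if Rle_dec (Rabs (INR (Hfun b h y) - t)) w then 1 else 0).
  set (Ngood := rsum Ind (b ^ k)).
  set (G := fun s => rsum (fun y => Tr b h C (s + Hfun b h y)) (b ^ k)).
  assert (ClA : forall y, Ind y * D <= rsum (fun i => Tr b h C (s0 + i + Hfun b h y)) M).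
  { intros y. unfold Ind. destruct (Rle_dec (Rabs (INR (Hfun b h y) - t)) w) as [Hg|Hg].
    - assert (Hg1 := Rle_abs (INR (Hfun b h y) - t)).
      assert (Hg2 := Rle_abs (- (INR (Hfun b h y) - t))). rewrite Rabs_Ropp in Hg2. rewrite Rmult_1_l.
      assert (Hq1 : (s0 + Hfun b h y <= a)%nat).
      { assert (INR (s0 + Hfun b h y) < INR (S a)) by (rewrite plus_INR, S_INR; lra). apply INR_lt in H. lia. }
      assert (Hq2 : (a + Ln <= s0 + Hfun b h y + M)%nat).
      { assert (INR (a + Ln) < INR (S (S (e + Hfun b h y)))) by (rewrite plus_INR, !S_INR, plus_INR; lra).
        apply INR_lt in H. unfold M. lia. }
      transitivity (rsum (fun i => Tr b h C (s0 + Hfun b h y + i)) M).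
      + apply (rsum_range (fun x => Tr b h C x)); auto. intros; apply Tr_nonneg.
      + right. apply rsum_ext. intros. f_equal. lia.
    - rewrite Rmult_0_l. apply rsum_nonneg. intros; apply Tr_nonneg. }
  assert (HsumG : Ngood * D <= rsum (fun i => G (s0 + i)%nat) M).
  { unfold G. rewrite rsum_swap. unfold Ngood. rewrite Rmult_comm, <- rsum_scal.
    apply rsum_le. intros y _. rewrite Rmult_comm. apply ClA. }
  destruct (pigeon (fun i => G (s0 + i)%nat) M) as [i [Hi HGi]]; [unfold M; lia|].
  assert (Hbk : (1 <= b ^ k)%nat) by (apply Nat.neq_0_lt_0, Nat.pow_nonzero; lia).
  assert (Hk0 : 0 < INR k) by (rewrite Ek; apply (lt_INR 0) in Hj0; lra).
  assert (HV := var_k b h Hb h0 k). fold mu in HV. fold t in HV.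
  assert (HInd01 : forall y, 0 <= Ind y <= 1) by (intros; unfold Ind; destruct Rle_dec; lra).
  assert (Hcheb : INR (b ^ k) * (1 - / B ^ 2) <= Ngood).
  { assert (HB2 : 0 < B ^ 2) by (apply pow_lt; auto).
    assert (HiB : 0 <= / B^2) by (left; apply Rinv_0_lt_compat; auto).
    destruct (Req_dec sg 0) as [Hs0'|Hs0'].
    - assert (Hall : forall y, (y < b ^ k)%nat -> Ind y = 1).
      { intros y Hy. unfold Ind. destruct Rle_dec as [|Hn']; auto. exfalso.
        assert (Hsq := rsum_ge_term (fun y => (INR (Hfun b h y) - t) ^ 2) (b ^ k) y (fun i _ => pow2_ge_0 _) Hy).
        rewrite HV, <- Hsg2, Hs0' in Hsq. simpl in Hsq.
        assert (Hz : INR (Hfun b h y) - t = 0) by nra. rewrite Hz, Rabs_R0 in Hn'. lra. }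
      unfold Ngood. rewrite (rsum_ext _ (fun _ => 1)) by auto. rewrite rsum_const.
      assert (0 <= INR (b^k)) by apply pos_INR. nra.
    - assert (Hsgp : 0 < sg) by lra.
      assert (Hw2 : w * w = digit_var b h * B^2 * INR k).
      { unfold w. rewrite <- Hsg2. replace (sg * B * sqrt (INR k) * (sg * B * sqrt (INR k))) with (sg*sg*(B*B)*(sqrt (INR k) * sqrt (INR k))) by ring.
        rewrite sqrt_sqrt by lra. ring. }
      assert (Hper : forall y, (1 - Ind y) * (w * w) <= (INR (Hfun b h y) - t) ^ 2).
      { intros y. unfold Ind. destruct Rle_dec as [|Hn'].
        - rewrite Rminus_diag, Rmult_0_l. apply pow2_ge_0.
        - apply Rnot_le_lt in Hn'. rewrite <- Rsqr_pow2, Rsqr_abs, Rsqr_pow2.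
          assert (0 <= w) by auto. nra. }
      assert (Hs : rsum (fun y => (1 - Ind y) * (w * w)) (b ^ k) <= INR (b ^ k) * INR k * digit_var b h).
      { rewrite <- HV. apply rsum_le. intros; apply Hper. }
      assert (Esum : rsum (fun y => (1 - Ind y) * (w * w)) (b ^ k) = (w*w) * (INR (b^k) * 1 + - Ngood)).
      { rewrite (rsum_ext _ (fun y => (w*w) * (1 + (-1) * Ind y))) by (intros; ring).
        rewrite rsum_scal, rsum_plus, rsum_const, rsum_scal. unfold Ngood. ring. }
      rewrite Esum in Hs.
      rewrite Hw2 in Hs.
      assert (Hvp : 0 < digit_var b h) by (rewrite <- Hsg2; nra).
      assert (Hq : (INR (b ^ k) * 1 + - Ngood) * B ^ 2 <= INR (b ^ k)).
      { apply Rmult_le_reg_r with (digit_var b h * INR k). nra.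
        replace ((INR (b ^ k) * 1 + - Ngood) * B ^ 2 * (digit_var b h * INR k)) with (digit_var b h * B ^ 2 * INR k * (INR (b ^ k) * 1 + - Ngood)) by ring.
        lra. }
      assert (E : INR (b ^ k) * (1 - / B ^ 2) = INR (b^k) - INR (b^k) / B^2) by (field; lra).
      rewrite E. assert (INR (b ^ k) - Ngood <= INR (b^k) / B^2).
      { apply Rmult_le_reg_r with (B^2); auto. replace (INR (b ^ k) / B ^ 2 * B ^ 2) with (INR (b^k)) by (field; lra). lra. }
      lra. }
  set (s := (s0 + i)%nat) in *.
  assert (Hs1 : (1 <= s)%nat) by (unfold s; lia).
  assert (Hsj : (s <= j)%nat) by (unfold s, M in *; lia).
  set (Pp := (rep b s * b ^ (j - s))%nat).
  destruct (rep_bounds b h Hb h0 s Hs1) as [Hr1 Hr2].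
  assert (Hbjs : (0 < b ^ (j - s))%nat) by (apply Nat.neq_0_lt_0, Nat.pow_nonzero; lia).
  assert (HPp1 : (b ^ (j - 1) <= Pp)%nat).
  { unfold Pp. replace (j - 1)%nat with ((s - 1) + (j - s))%nat by lia. rewrite Nat.pow_add_r.
    apply Nat.mul_le_mono_r; auto. }
  assert (HPp2 : (Pp < b ^ j)%nat).
  { unfold Pp. replace j with (s + (j - s))%nat at 2 by lia. rewrite Nat.pow_add_r.
    apply Nat.mul_lt_mono_pos_r; auto. }
  assert (HHP : Hfun b h Pp = s).
  { unfold Pp. replace (rep b s * b ^ (j - s))%nat with (rep b s * b ^ (j - s) + 0)%nat by lia.
    rewrite (Hfun_shift b h Hb h0 (j - s) (rep b s) 0) by lia. rewrite (Hfun_rep b h Hb h0 h1). change (Hfun b h 0) with 0%nat. lia. }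
  set (a2 := (Pp * b ^ k)%nat). set (c2 := (Pp * b ^ k + b ^ k - 1)%nat).
  assert (Hic : icard a2 c2 = (b ^ k)%nat) by (unfold icard, a2, c2; lia).
  exists (4 * j)%nat, a2, c2.
  split; [|split].
  - rewrite mult_INR. simpl (INR 4). replace (1+1+1+1) with 4 by ring. auto.
  - unfold strict. split; [lia|]. split; [|split].
    + replace (4 * j - 1)%nat with ((j - 1) + k)%nat by (unfold k; lia). rewrite Nat.pow_add_r.
      unfold a2. apply Nat.mul_le_mono_r; auto.
    + assert ((Pp + 1) * b ^ k <= b ^ j * b ^ k)%nat by (apply Nat.mul_le_mono_r; lia).
      rewrite <- Nat.pow_add_r in H. replace (j + k)%nat with (4 * j)%nat in H by (unfold k; lia).
      unfold c2. lia.
    + rewrite Hic. rewrite pow_INR. rewrite <- Rpower_pow by auto. f_equal.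
      unfold k. rewrite !mult_INR. simpl. field.
  - rewrite Em4, Em8, Hdd. unfold density. rewrite count_Tr, Hic.
    set (Cn := rsum (fun i0 => Tr b h C (a2 + i0)) (b ^ k)).
    assert (HcG : G s <= Cn).
    { unfold G, Cn. apply rsum_le. intros y Hy.
      assert (E : Hfun b h (a2 + y) = (s + Hfun b h y)%nat).
      { unfold a2. rewrite (Hfun_shift b h Hb h0 k Pp y Hy). rewrite HHP. reflexivity. }
      rewrite <- E. apply Tr_H. }
    set (N := INR (b ^ k)).
    assert (HN : 0 < N) by (unfold N; apply (lt_INR 0); lia).
    set (e1 := / B ^ 2). set (e2 := 2 * sg / sqrt mu * / B).
    set (Lr := INR Ln) in *.
    assert (HB2' : 1 <= B ^ 2).
    { assert (HB8 : 20 <= B^8).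
      { assert (0 <= sqrt 2 * sg * B^5) by (apply Rmult_le_pos; [apply Rmult_le_pos; [apply sqrt_pos|lra]| apply pow_le; lra]). nra. }
      assert (H1B : 1 < B).
      { apply Rnot_le_lt; intro. assert (B^8 <= 1^8) by (apply pow_incr; lra). simpl in *. lra. }
      nra. }
    assert (He1 : 0 <= 1 - e1).
    { unfold e1. assert (/ B^2 <= / 1) by (apply Rinv_le_contravar; lra). rewrite Rinv_1 in H. lra. }
    set (X := (1 - e1) * D).
    assert (HX : 0 <= X) by (unfold X; nra).
    assert (HMp : 1 <= INR M) by (apply (le_INR 1); unfold M; lia).
    assert (HNX : N * X <= INR M * G s).
    { unfold X. assert (N * (1 - e1) * D <= Ngood * D) by (apply Rmult_le_compat_r; auto). nra. }
    assert (Hsm : 0 < sqrt mu) by (apply sqrt_lt_R0; auto).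
    assert (Hkm : sqrt (INR k) * sqrt mu <= B ^ 4).
    { rewrite <- sqrt_mult by lra. apply sqrt_le_of_sq; [apply pow_le; lra|].
      replace ((B^4)^2) with (B^8) by ring. unfold t in Hj2'. lra. }
    assert (Hwe : 2 * w <= e2 * Lr).
    { unfold e2, w. rewrite HL. apply Rmult_le_reg_r with (sqrt mu * B); [nra|].
      replace (2 * sg / sqrt mu * / B * B ^ 6 * (sqrt mu * B)) with (2 * sg * B^6) by (field; lra).
      replace (2 * (sg * B * sqrt (INR k)) * (sqrt mu * B)) with (2 * sg * B^2 * (sqrt (INR k) * sqrt mu)) by ring.
      replace (2 * sg * B^6) with (2 * sg * B^2 * B^4) by ring.
      apply Rmult_le_compat_l; auto. assert (0 < B^2) by (apply pow_lt; auto). nra. }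
    assert (He2 : 0 <= e2).
    { unfold e2. apply Rmult_le_pos; [|left; apply Rinv_0_lt_compat; auto]. apply Rmult_le_pos; [lra|left; apply Rinv_0_lt_compat; auto]. }
    assert (HQ : (1 - e2) * INR M <= Lr).
    { destruct (Rle_dec 0 (1 - e2)).
      - assert ((1 - e2) * INR M <= (1 - e2) * (Lr + 2 * w)) by (apply Rmult_le_compat_l; auto). nra.
      - nra. }
    assert (HLr : 0 < Lr) by lra.
    assert (Step1 : D / Lr * (1 - e1) * (1 - e2) <= X / INR M).
    { replace (D / Lr * (1 - e1) * (1 - e2)) with (X * (1 - e2) / Lr) by (unfold X; field; lra).
      apply Rmult_le_reg_r with (Lr * INR M); [nra|].
      replace (X * (1 - e2) / Lr * (Lr * INR M)) with (X * ((1 - e2) * INR M)) by (field; lra).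
      replace (X / INR M * (Lr * INR M)) with (X * Lr) by (field; lra).
      apply Rmult_le_compat_l; auto. }
    assert (Step2 : X / INR M <= Cn / N).
    { apply Rmult_le_reg_r with (N * INR M); [nra|].
      replace (X / INR M * (N * INR M)) with (N * X) by (field; lra).
      replace (Cn / N * (N * INR M)) with (INR M * Cn) by (field; lra).
      assert (INR M * G s <= INR M * Cn) by (apply Rmult_le_compat_l; lra). lra. }
    lra.
Qed.
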